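(* Let $X\subset\mathbb R^n$, let $\alpha:[0,1]\to X$ be a parametrization of a line segment, and let $\beta:[0,1]\to X$ be any path with $\beta(0)=\alpha(0)$ and $\beta(1)=\alpha(1)$. Then $o(\alpha,(P,Q))\le o(\beta,(P,Q))$ for every pair $(P,Q)$ of distinct parallel hyperplanes. If in addition $\beta$ is not a reparametrization of $\alpha$, then there exists such a pair $(P,Q)$ with $o(\alpha,(P,Q))<o(\beta,(P,Q))$.
   Context: Let $g:\mathbb R^n\to[-1,1]$ depend only on $x_1$: $g=-1$ if $x_1\le-3$, $\frac12(x_1+1)$ if $-3\le x_1\le-1$, $0$ if $-1\le x_1\le1$, $\frac12(x_1-1)$ if $1\le x_1\le3$, $1$ if $x_1\ge3$. For distinct parallel hyperplanes $(P,Q)$, $g_{(P,Q)}=g\circ h_{(P,Q)}$ where $h_{(P,Q)}$ is a composition of a dilation, a rotation and a translation sending $P$ to $\{x_1=-3\}$ and $Q$ to $\{x_1=3\}$. For continuous $f:[a,b]\to\mathbb R^n$, the oscillation $o(f,(P,Q))$ is the supremum of $-\sum_{i=1}^k g_{(P,Q)}(f(a_{i-1}))g_{(P,Q)}(f(a_i))$ over finite collections $a\le a_0\le\dots\le a_k\le b$ (empty sums $=0$). *)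

(* Defs.v *)
From HB Require Import structures.
From mathcomp Require Import all_boot all_order all_algebra.
From mathcomp Require Import all_classical all_reals all_analysis.
Set Implicit Arguments. Unset Strict Implicit. Unset Printing Implicit Defensive.
Import Order.TTheory GRing.Theory Num.Theory.
Import numFieldNormedType.Exports.
Local Open Scope classical_set_scope.
Local Open Scope ring_scope.

Section Defs.
Variable R : realType.

(* The profile g : R^n -> [-1,1]; it depends only on x_1, so we give it on the first coordinate. *)
Definition gprof (x : R) : R :=
  if x <= -3 then -1
  else if x <= -1 then (x + 1) / 2
  else if x <= 1 then 0
  else if x <= 3 then (x - 1) / 2
  else 1.

Variable n : nat.
Notation pt := 'rV[R]_n.+1.

Definition coord1 (x : pt) : R := x ord0 ord0.

Definition dotv (x y : pt) : R := (x *m y^T) ord0 ord0.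

Definition distinct_parallel_hyperplanes (P Q : set pt) : Prop :=
  exists (v : pt) (a b : R), v != 0 /\ a != b /\
    P = [set x | dotv x v = a] /\ Q = [set x | dotv x v = b].

Definition orthogonal_mx (O : 'M[R]_n.+1) : Prop := O *m O^T = 1%:M.

Definition similarity (h : pt -> pt) : Prop :=
  exists (c : R) (O : 'M[R]_n.+1) (t : pt),
    0 < c /\ orthogonal_mx O /\ h = (fun x => c *: (x *m O) + t).

Definition normalizes (P Q : set pt) (h : pt -> pt) : Prop :=
  similarity h /\ h @` P = [set y | coord1 y = -3] /\ h @` Q = [set y | coord1 y = 3].

Definition gPQ (h : pt -> pt) (x : pt) : R := gprof (coord1 (h x)).

(* o(f, (P,Q)) for f : [a,b] -> R^(n+1), with g_(P,Q) = G; a finite collection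
   a <= a_0 <= ... <= a_k <= b is a sorted sequence s in [a,b]; the sum runs over
   consecutive pairs (empty when size s <= 1). *)
Definition oscillation (a b : R) (f : R -> pt) (G : pt -> R) : \bar R :=
  ereal_sup [set (\sum_(i < (size s).-1)
                     - (G (f (nth 0 s i)) * G (f (nth 0 s i.+1))))%:E
            | s in [set s : seq R | sorted <=%R s /\ all (fun t => a <= t <= b) s]].

Definition path_in (X : set pt) (f : R -> pt) : Prop :=
  {within `[0, 1], continuous f} /\ (forall t, t \in `[0, 1] -> X (f t)).

Definition segment (p q : pt) : set pt :=
  [set (1 - s) *: p + s *: q | s in `[0, 1]].

Definition segment_param (f : R -> pt) : Prop :=
  (exists p q : pt, f @` `[0, 1] = segment p q) /\
  (forall s t, s \in `[0, 1] -> t \in `[0, 1] -> f s = f t -> s = t).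

Definition reparam_of (beta alpha : R -> pt) : Prop :=
  exists phi : R -> R,
    {within `[0, 1], continuous phi} /\
    (forall s t, s \in `[0, 1] -> t \in `[0, 1] -> s <= t -> phi s <= phi t) /\
    phi 0 = 0 /\ phi 1 = 1 /\
    (forall t, t \in `[0, 1] -> beta t = alpha (phi t)).

End Defs.

(* Main.v *)
Require Import Defs.
From HB Require Import structures.
From mathcomp Require Import all_boot all_order all_algebra.
From mathcomp Require Import all_classical all_reals all_analysis.
From mathcomp Require Import ring lra.
Import Order.TTheory GRing.Theory Num.Theory.
Import numFieldNormedType.Exports.
Local Open Scope classical_set_scope.
Local Open Scope ring_scope.
Set Implicit Arguments. Unset Strict Implicit.
Fixpoint vsum {R : realType} (l : seq R) : R :=
  match l with
  | x :: ((y :: _) as l') => - (x * y) + vsum l'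
  | _ => 0
  end.

Lemma sumE (R : realType) (F : R -> R) (s : seq R) :
  \sum_(i < (size s).-1) - (F (nth 0 s i) * F (nth 0 s i.+1)) = vsum (map F s).
Proof.
elim: s => [|x s IH]; first by rewrite big_ord0.
case: s IH => [|y s] IH; first by rewrite big_ord0.
rewrite /= big_ord_recl /=; congr (_ + _).
rewrite -[RHS]/(vsum (map F (y :: s))) -IH.
by apply: eq_bigr => i _; rewrite add0n.
Qed.

Definition S01 (R : realType) := [set s : seq R | sorted <=%R s /\ all (fun t => 0 <= t <= 1) s].

Definition osc (R : realType) (F : R -> R) : \bar R :=
  ereal_sup [set (vsum (map F s))%:E | s in @S01 R].

Lemma oscE (R : realType) n (f : R -> 'rV[R]_n.+1) G :
  oscillation 0 1 f G = osc (fun r => G (f r)).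
Proof.
rewrite /oscillation /osc; congr ereal_sup; apply: eq_imagel => s _.
rewrite -(sumE (fun r => G (f r))) /=. by [].
Qed.

Lemma lift_vals (R : realType) (B : R -> R) (us : seq R) (r0 : R) :
  {within `[0, 1], continuous B} -> 0 <= r0 <= 1 -> sorted <=%R us ->
  (forall u, u \in us -> B r0 <= u <= B 1) ->
  exists rs, [/\ path <=%R r0 rs, all (fun t => t <= 1) rs & map B rs = us].
Proof.
move=> cB; elim: us r0 => [|u us IH] r0 hr0 hs hu; first by exists [::].
have /andP[h1 h2] := hu u (mem_head _ _).
have sub : `[r0, 1] `<=` `[0, 1].
  move=> x; rewrite /= !in_itv /= => /andP[a b]; apply/andP; split => //.
  by apply: le_trans a; case/andP: hr0.
have cB' : {within `[r0, 1], continuous B} by exact: continuous_subspaceW cB.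
have r01 : r0 <= 1 by case/andP: hr0.
have [c hc Bc] : exists2 c, c \in `[r0, 1] & B c = u.
  apply: IVT => //.
  rewrite (min_idPl (le_trans h1 h2)) (max_idPr (le_trans h1 h2)).
  by rewrite h1 h2.
move: hc; rewrite in_itv /= => /andP[c0 c1].
have hc01 : 0 <= c <= 1 by rewrite c1 andbT; apply: le_trans c0; case/andP: hr0.
have hpath := hs; rewrite /= path_sortedE in hpath; last exact: le_trans.
case/andP: hpath => hall hsort.
have [rs [p1 p2 p3]] : exists rs, [/\ path <=%R c rs, all (fun t => t <= 1) rs & map B rs = us].
  apply: IH => // u' hu'; rewrite Bc; apply/andP; split.
    by move/allP: hall => /(_ u' hu').
  by case/andP: (hu u' (mem_behead (s:=u :: us) hu')).
exists (c :: rs); split => /=; first by rewrite c0 p1.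
  by rewrite c1 p2.
by rewrite Bc p3.
Qed.

Lemma osc_le (R : realType) (g A B : R -> R) :
  (forall x y, 0 <= x <= 1 -> 0 <= y <= 1 -> x <= y -> A x <= A y) ->
  {within `[0, 1], continuous B} -> A 0 = B 0 -> A 1 = B 1 ->
  (osc (fun r => g (A r)) <= osc (fun r => g (B r)))%E.
Proof.
move=> Amono cB A0 A1; rewrite /osc; apply: ge_ereal_sup => _ [s [Hs Ha] <-].
have h01 : 0 <= (0:R) <= 1 by rewrite lexx ler01.
have h11 : 0 <= (1:R) <= 1 by rewrite lexx ler01.
have [rs [p1 p2 p3]] : exists rs, [/\ path <=%R 0 rs, all (fun t => t <= 1) rs & map B rs = map A s].
  apply: lift_vals => //.
    apply: (homo_sorted_in (P := fun t => 0 <= t <= 1)) Ha Hs.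
    by move=> x y hx hy; apply: Amono.
  move=> u /mapP [x hx ->]; move/allP: Ha => /(_ x hx) hx01.
  by rewrite -A0 -A1 !Amono //; case/andP: hx01.
rewrite path_sortedE in p1; last exact: le_trans.
case/andP: p1 => q1 q2.
apply: ereal_sup_ubound; exists rs.
  split => //; apply/allP => x hx; move/allP: q1 => /(_ x hx) ->.
  by move/allP: p2 => /(_ x hx) ->.
have -> : map (fun r => g (B r)) rs = map g (map B rs) by rewrite -map_comp.
by rewrite p3 -map_comp.
Qed.

Lemma osc_le2 (R : realType) (g A B : R -> R) :
  ((forall x y, 0 <= x <= 1 -> 0 <= y <= 1 -> x <= y -> A x <= A y) \/
   (forall x y, 0 <= x <= 1 -> 0 <= y <= 1 -> x <= y -> A y <= A x)) ->
  {within `[0, 1], continuous B} -> A 0 = B 0 -> A 1 = B 1 ->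
  (osc (fun r => g (A r)) <= osc (fun r => g (B r)))%E.
Proof.
case=> [Am|Am] cB A0 A1; first exact: osc_le.
have := @osc_le R (fun x => g (- x)) (fun r => - A r) (fun r => - B r).
rewrite /=.
have e1 : (fun r => g (- - A r)) = (fun r => g (A r)) by apply/funext => r; rewrite opprK.
have e2 : (fun r => g (- - B r)) = (fun r => g (B r)) by apply/funext => r; rewrite opprK.
rewrite e1 e2; apply.
- by move=> x y hx hy xy; rewrite lerN2; apply: Am.
- have h : {within `[0, 1], continuous ((fun x : R => - x) \o B)}.
    by apply: within_continuous_comp => // x _; apply: opp_continuous.
  exact: h.
- by rewrite A0.
- by rewrite A1.
Qed.

Lemma vsum_le0 (R : realType) (l : seq R) : all (fun x => 0 <= x) l -> vsum l <= 0.
Proof.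
elim: l => [|x l IH] //= /andP[hx hl].
case: l IH hl => [|y l] IH hl //=.
have hy : 0 <= y by case/andP: hl.
have := IH hl; rewrite /=.
move=> h; rewrite -[X in _ <= X]addr0; apply: lerD => //.
by rewrite oppr_le0 mulr_ge0.
Qed.

Lemma vsum_bound (R : realType) (lo hi : R) (l : seq R) :
  sorted <=%R l -> (forall u, u \in l -> lo <= u <= hi) ->
  vsum l <= Num.max 0 (- (lo * hi)).
Proof.
elim: l => [|x l IH] hs hb; first by rewrite /= le_max lexx.
have hs' : sorted <=%R l by apply: path_sorted hs.
have hall : all (fun y => x <= y) l.
  by apply: order_path_min hs; exact: le_trans.
have [hx|hx] := leP 0 x.
  apply: le_trans (vsum_le0 _) _; last by rewrite le_max lexx.
  rewrite /= hx /=; apply/allP => y hy; apply: le_trans hx _.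
  by move/allP: hall => /(_ y hy).
case: l IH hs hs' hall hb => [|y l] IH hs hs' hall hb; first by rewrite /= le_max lexx.
have hIH : vsum (y :: l) <= Num.max 0 (- (lo * hi)).
  by apply: IH => // u hu; apply: hb; rewrite inE hu orbT.
have /andP[lox _] := hb x (mem_head _ _).
have /andP[_ yhi] : lo <= y <= hi by apply: hb; rewrite inE mem_head orbT.
rewrite [vsum _]/=.
have [hy|hy] := leP 0 y.
  have h0 : vsum (y :: l) <= 0.
    apply: vsum_le0; rewrite /= hy /=; apply/allP => z hz.
    apply: le_trans hy _.
    by apply: (allP (order_path_min le_trans hs')).
  have h1 : - (x * y) <= - (lo * hi) by nra.
  apply: le_trans (_ : - (lo * hi) + 0 <= _).
    exact: lerD.
  by rewrite addr0 le_max lexx orbT.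
have h1 : - (x * y) <= 0 by nra.
rewrite -[X in _ <= X]add0r; exact: lerD.
Qed.

Lemma osc_strict (R : realType) (phi psi : R -> R) (s t : R) :
  (forall x y, 0 <= x <= 1 -> 0 <= y <= 1 -> x <= y -> phi x <= phi y) ->
  (forall r, 0 <= r <= 1 -> -1 <= phi r <= 1) ->
  psi 0 = phi 0 -> psi 1 = phi 1 ->
  0 <= s -> s <= t -> t <= 1 -> psi s = 1 -> psi t = -1 ->
  (osc phi < osc psi)%E.
Proof.
move=> Pm Pb P0 P1 s0 st t1 ps pt.
have h01 : 0 <= (0:R) <= 1 by rewrite lexx ler01.
have h11 : 0 <= (1:R) <= 1 by rewrite lexx ler01.
apply: (@le_lt_trans _ _ (Num.max 0 (- (phi 0 * phi 1)))%:E).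
  apply: ge_ereal_sup => _ [l [Hs Ha] <-]; rewrite lee_fin.
  apply: vsum_bound.
    exact: (homo_sorted_in (P := fun t => 0 <= t <= 1)) Ha Hs.
  move=> u /mapP [x hx ->]; move/allP: Ha => /(_ x hx) hx01.
  by rewrite !Pm //; case/andP: hx01.
apply: (@lt_le_trans _ _ (vsum [:: psi 0; psi s; psi t; psi 1])%:E); last first.
  apply: ereal_sup_ubound; exists [:: 0; s; t; 1] => //.
  split; rewrite /= ?s0 ?st ?t1 ?lexx ?ler01 ?(le_trans s0 st) ?(le_trans st t1) //.
rewrite lte_fin /= ps pt P0 P1.
have := Pb 0 h01; have := Pb 1 h11; have := Pm 0 1 h01 h11 ler01.
set a := phi 0; set b := phi 1 => hab /andP[b1 b2] /andP[a1 a2].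
rewrite gt_max; apply/andP; split; first lra.
have [ha|ha] := leP 0 a; first nra.
have [hb|hb] := leP 0 b; nra.
Qed.

Lemma dotvE (R : realType) n (x y : 'rV[R]_n.+1) : dotv x y = \sum_j x 0 j * y 0 j.
Proof. by rewrite /dotv !mxE; apply: eq_bigr => j _; rewrite mxE. Qed.

Lemma dotvDl (R : realType) n (x y z : 'rV[R]_n.+1) : dotv (x + y) z = dotv x z + dotv y z.
Proof. by rewrite !dotvE -big_split; apply: eq_bigr => j _; rewrite mxE mulrDl. Qed.

Lemma dotvZl (R : realType) n (a : R) (x z : 'rV[R]_n.+1) : dotv (a *: x) z = a * dotv x z.
Proof. by rewrite !dotvE mulr_sumr; apply: eq_bigr => j _; rewrite mxE mulrA. Qed.

Lemma dotvC (R : realType) n (x y : 'rV[R]_n.+1) : dotv x y = dotv y x.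
Proof. by rewrite !dotvE; apply: eq_bigr => j _; rewrite mulrC. Qed.

Lemma dotvNl (R : realType) n (x z : 'rV[R]_n.+1) : dotv (- x) z = - dotv x z.
Proof. by rewrite -scaleN1r dotvZl mulN1r. Qed.

Lemma dotvBl (R : realType) n (x y z : 'rV[R]_n.+1) : dotv (x - y) z = dotv x z - dotv y z.
Proof. by rewrite dotvDl dotvNl. Qed.

Lemma dotvDr (R : realType) n (x y z : 'rV[R]_n.+1) : dotv z (x + y) = dotv z x + dotv z y.
Proof. by rewrite dotvC dotvDl !(dotvC z). Qed.

Lemma dotvZr (R : realType) n (a : R) (x z : 'rV[R]_n.+1) : dotv z (a *: x) = a * dotv z x.
Proof. by rewrite dotvC dotvZl dotvC. Qed.

Lemma dotvBr (R : realType) n (x y z : 'rV[R]_n.+1) : dotv z (x - y) = dotv z x - dotv z y.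
Proof. by rewrite dotvC dotvBl !(dotvC z). Qed.

Lemma dotv0l (R : realType) n (z : 'rV[R]_n.+1) : dotv 0 z = 0.
Proof. by rewrite -(scale0r (0 : 'rV[R]_n.+1)) dotvZl mul0r. Qed.

Lemma dotv_ge0 (R : realType) n (x : 'rV[R]_n.+1) : 0 <= dotv x x.
Proof. by rewrite dotvE; apply: sumr_ge0 => j _; rewrite -expr2 sqr_ge0. Qed.

Lemma dotv_gt0 (R : realType) n (x : 'rV[R]_n.+1) : x != 0 -> 0 < dotv x x.
Proof.
move=> hx; rewrite lt_def dotv_ge0 andbT; apply: contra hx => /eqP h.
rewrite dotvE in h.
have H : forall j, x 0 j * x 0 j = 0.
  by move=> j; apply: (psumr_eq0P _ h) => // k _; rewrite -expr2 sqr_ge0.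
apply/eqP/matrixP => i j; rewrite (ord1 i) mxE.
by have /eqP := H j; rewrite mulf_eq0 orbb => /eqP.
Qed.

Lemma sum_continuous (R : realType) (T : topologicalType) k (F : 'I_k -> T -> R) :
  (forall j, continuous (F j)) -> continuous (fun x => \sum_(j < k) F j x).
Proof.
elim: k F => [|k IH] F hF.
  have -> : (fun x => \sum_(j < 0) F j x) = (fun=> 0) by apply/funext => x; rewrite big_ord0.
  by move=> x; apply: cst_continuous.
have -> : (fun x => \sum_(j < k.+1) F j x) =
   (fun x => \sum_(j < k) F (widen_ord (leqnSn k) j) x + F ord_max x).
  by apply/funext => x; rewrite big_ord_recr.
move=> x.
have h1 := IH (fun j => F (widen_ord (leqnSn k) j)) (fun j => hF _) x.
exact: (continuousD h1 (hF ord_max x)).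
Qed.

Lemma dotv_continuous (R : realType) n (y : 'rV[R]_n.+1) :
  continuous (fun x : 'rV[R]_n.+1 => dotv x y).
Proof.
have -> : (fun x : 'rV[R]_n.+1 => dotv x y) = (fun x => \sum_j x 0 j * y 0 j).
  by apply/funext => x; rewrite dotvE.
apply: sum_continuous => j x.
have h1 := (@coord_continuous R 1 n.+1 0 j x).
have h2 : {for x, continuous (fun _ : 'rV[R]_n.+1 => y 0 j)} by apply: cst_continuous.
exact: (continuousM h1 h2).
Qed.

Lemma dotv_within (R : realType) n (f : R -> 'rV[R]_n.+1) (y : 'rV[R]_n.+1) (A : set R) :
  {within A, continuous f} -> {within A, continuous (fun r => dotv (f r) y)}.
Proof.
move=> hf.
have h : {within A, continuous ((fun x => dotv x y) \o f)}.
  by apply: within_continuous_comp => // x _; apply: dotv_continuous.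
exact: h.
Qed.

Lemma sim_affine (R : realType) n (h : 'rV[R]_n.+1 -> 'rV[R]_n.+1) :
  similarity h -> exists W k, forall x, coord1 (h x) = dotv x W + k.
Proof.
move=> [c [M [t [_ [_ ->]]]]]; exists (c *: (col 0 M)^T), (t 0 0) => x.
rewrite /coord1 !mxE dotvZr dotvE; congr (c * _ + _).
by apply: eq_bigr => j _; rewrite !mxE.
Qed.

Lemma norm_formula (R : realType) n (v : 'rV[R]_n.+1) (a b : R) h :
  v != 0 -> a != b ->
  normalizes [set x | dotv x v = a] [set x | dotv x v = b] h ->
  forall y, coord1 (h y) = -3 + 6 * ((dotv y v - a) / (b - a)).
Proof.
move=> v0 ab [hsim [hP hQ]] y.
have [W [k hW]] := sim_affine hsim.
have hPa : forall x, dotv x v = a -> dotv x W + k = -3.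
  move=> x hx; have : (h @` [set x | dotv x v = a]) (h x) by exists x.
  by rewrite hP /= hW.
have hQb : forall x, dotv x v = b -> dotv x W + k = 3.
  move=> x hx; have : (h @` [set x | dotv x v = b]) (h x) by exists x.
  by rewrite hQ /= hW.
have vv0 : dotv v v != 0 by rewrite gt_eqF // dotv_gt0.
have ba0 : b - a != 0 by rewrite subr_eq0 eq_sym.
set p0 := (a / dotv v v) *: v; set q0 := (b / dotv v v) *: v.
have hp0 : dotv p0 v = a by rewrite dotvZl mulfVK.
have hq0 : dotv q0 v = b by rewrite dotvZl mulfVK.
set mu := (dotv y v - a) / (b - a).
set yy := y - mu *: (q0 - p0).
have hyy : dotv yy v = a.
  rewrite /yy dotvBl dotvZl dotvBl hp0 hq0 /mu mulfVK //; lra.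
have e : dotv y W = dotv yy W + mu * (dotv q0 W - dotv p0 W).
  by rewrite /yy dotvBl dotvZl dotvBl addrNK.
rewrite hW e.
have := hPa _ hyy; have := hPa _ hp0; have := hQb _ hq0.
move=> h1 h2 h3.
have -> : dotv q0 W - dotv p0 W = 6 by lra.
lra.
Qed.

Lemma mulmx00 (R : realType) n (x : 'rV[R]_n.+1) (M : 'M[R]_n.+1) :
  (x *m M) 0 0 = dotv x (col 0 M)^T.
Proof. by rewrite dotvE mxE; apply: eq_bigr => j _; rewrite !mxE. Qed.

Lemma uuT (R : realType) n (u : 'rV[R]_n.+1) : u *m u^T = (dotv u u)%:M.
Proof. by rewrite [LHS]mx11_scalar. Qed.

Lemma householder (R : realType) n (w : 'rV[R]_n.+1) : dotv w w = 1 ->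
  exists M : 'M[R]_n.+1, orthogonal_mx M /\ (col 0 M)^T = w.
Proof.
move=> ww.
set e : 'rV[R]_n.+1 := delta_mx 0 0.
have ee : dotv e e = 1.
  rewrite dotvE (bigD1 0) //= big1 ?addr0; first by rewrite mxE eqxx mulr1.
  by move=> j /negbTE hj; rewrite !mxE hj andbF mul0r.
have we : dotv w e = w 0 0.
  rewrite dotvE (bigD1 0) //= big1 ?addr0; first by rewrite mxE eqxx mulr1.
  by move=> j /negbTE hj; rewrite !mxE hj andbF mulr0.
have [hu|hu] := eqVneq (w - e) 0.
  exists 1; split; first by rewrite /orthogonal_mx trmx1 mulmx1.
  move/eqP: hu; rewrite subr_eq0 => /eqP ->.
  by apply/matrixP => i j; rewrite !mxE (ord1 i) eq_sym.
set u := w - e.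
have uu : dotv u u = 2 - 2 * w 0 0.
  rewrite /u dotvBl !dotvBr ww ee (dotvC e w) we; lra.
have uu0 : dotv u u != 0 by rewrite gt_eqF // dotv_gt0.
set k := 2 / dotv u u.
set M := u^T *m u.
have MM : M *m M = dotv u u *: M.
  by rewrite /M mulmxA -(mulmxA u^T) uuT mul_mx_scalar -scalemxAl.
have MT : M^T = M by rewrite /M trmx_mul trmxK.
exists (1 - k *: M); split.
  have OT : (1 - k *: M)^T = 1 - k *: M.
    apply/matrixP => i j; have := congr1 (fun A : 'M[R]_n.+1 => A i j) MT.
    by rewrite !mxE /= eq_sym => ->.
  rewrite /orthogonal_mx OT.
  rewrite mulmxBl mul1mx mulmxBr mulmx1 -scalemxAl -scalemxAr MM scalerA scalerA.
  have -> : k * k * dotv u u = k + k by rewrite -mulrA /k mulfVK // mulr_natr mulr2n.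
  by rewrite scalerDl opprB addrK subrK.
have Mj : forall j, M j 0 = u 0 j * u 0 0.
  by move=> j; rewrite /M mxE big_ord1 !mxE.
apply/matrixP => i j; rewrite (ord1 i) !mxE big_ord1 !mxE /= /k uu.
have w1 : 2 - 2 * w 0 0 != 0 by rewrite -uu.
have hk : 2 / (2 - 2 * w 0 0) * (w 0 0 - 1) = -1.
  apply: (mulIf w1); rewrite mulrAC mulfVK //; lra.
rewrite mulrCA hk; lra.
Qed.

Lemma exists_normalizer (R : realType) n (v : 'rV[R]_n.+1) (a b : R) :
  v != 0 -> a < b ->
  exists h, normalizes [set x | dotv x v = a] [set x | dotv x v = b] h.
Proof.
move=> v0 ab.
have vv0 : 0 < dotv v v by exact: dotv_gt0.
set nv := Num.sqrt (dotv v v).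
have nv0 : 0 < nv by rewrite sqrtr_gt0.
have nvn0 : nv != 0 by rewrite gt_eqF.
have ww : dotv (nv^-1 *: v) (nv^-1 *: v) = 1.
  rewrite dotvZl dotvZr mulrA -invfM -expr2 sqr_sqrtr ?mulVf //; first by rewrite gt_eqF.
  exact: ltW.
have [M [oM cM]] := householder ww.
have ba0 : b - a != 0 by rewrite subr_eq0 gt_eqF.
have ba : 0 < b - a by rewrite subr_gt0.
set c := 6 * nv / (b - a).
have c0 : 0 < c by rewrite /c divr_gt0 // mulr_gt0.
set t : 'rV[R]_n.+1 := const_mx (-3 - 6 * (a / (b - a))).
set h := fun x : 'rV[R]_n.+1 => c *: (x *m M) + t.
have hform : forall x, coord1 (h x) = -3 + 6 * ((dotv x v - a) / (b - a)).
  move=> x.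
  have e : \sum_j x ord0 j * M j ord0 = nv^-1 * dotv x v.
    by rewrite -dotvZr -cM -mulmx00 mxE.
  rewrite /coord1 /h !mxE e /c.
  field; exact/andP.
have hinv : forall y, h ((c^-1 *: (y - t)) *m M^T) = y.
  move=> y; rewrite /h -mulmxA (mulmx1C oM) mulmx1 scalerA mulfV ?gt_eqF //.
  by rewrite scale1r subrK.
exists h; split.
  by exists c, M, t; split => //; split.
split; apply/seteqP; split.
- by move=> _ [x hx <-]; rewrite /= hform hx subrr mul0r mulr0 addr0.
- move=> y hy; exists ((c^-1 *: (y - t)) *m M^T); last exact: hinv.
  have := hform ((c^-1 *: (y - t)) *m M^T); rewrite hinv hy /=.
  set q := (_ / (b - a)) => hq.
  have : q = 0 by lra.
  move/eqP; by rewrite /q mulf_eq0 invr_eq0 (negbTE ba0) orbF subr_eq0 => /eqP.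
- by move=> _ [x hx <-]; rewrite /= hform hx divff //; lra.
- move=> y hy; exists ((c^-1 *: (y - t)) *m M^T); last exact: hinv.
  have := hform ((c^-1 *: (y - t)) *m M^T); rewrite hinv hy /=.
  set X := dotv _ v; set q := (_ / (b - a)) => hq.
  have q1 : q = 1 by lra.
  have : X - a = q * (b - a) by rewrite /q divfK.
  rewrite q1 mul1r; lra.
Qed.

Lemma gprof_mono (R : realType) (x y : R) : x <= y -> gprof x <= gprof y.
Proof.
move=> xy; rewrite /gprof.
case: (lerP x (-3)) => h1; case: (lerP y (-3)) => h2 //; try lra;
case: (lerP x (-1)) => h3; case: (lerP y (-1)) => h4 //; try lra;
case: (lerP x 1) => h5; case: (lerP y 1) => h6 //; try lra;
case: (lerP x 3) => h7; case: (lerP y 3) => h8 //; lra.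
Qed.

Lemma gprof_bound (R : realType) (x : R) : -1 <= gprof x <= 1.
Proof.
rewrite /gprof.
case: (lerP x (-3)) => h1; first lra.
case: (lerP x (-1)) => h3; first by apply/andP; split; lra.
case: (lerP x 1) => h5; first lra.
case: (lerP x 3) => h7; last lra.
by apply/andP; split; lra.
Qed.

Lemma gprof3 (R : realType) : gprof (3 : R) = 1.
Proof.
rewrite /gprof.
case: (lerP (3:R) (-3)) => h1; first lra.
case: (lerP (3:R) (-1)) => h3; first lra.
case: (lerP (3:R) 1) => h5; first lra.
case: (lerP (3:R) 3) => h7; last lra.
have -> : (3:R) - 1 = 2 by lra.
by rewrite divff // pnatr_eq0.
Qed.

Lemma gprofm3 (R : realType) : gprof (-3 : R) = -1.
Proof. by rewrite /gprof lexx. Qed.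

Lemma within_comp2 (R : realType) (f g : R -> R) (A B : set R) :
  {within A, continuous f} -> {within B, continuous g} ->
  (forall x, A x -> B (f x)) -> {within A, continuous (fun x => g (f x))}.
Proof.
move=> cf cg AB; apply/subspace_continuousP => x Ax.
move/subspace_continuousP: cf => /(_ x Ax) cf.
move/subspace_continuousP: cg => /(_ (f x) (AB x Ax)) cg.
move=> S /= hS.
have hS' := cg S hS.
have := cf _ hS'.
move=> H.
have H2 : \forall z \near x, A z -> S (g (f z)).
  have H' : \forall y \near x, A y -> (B (f y) -> S (g (f y))) := H.
  by apply: filterS H' => z H' Az; exact: H' Az (AB _ Az).
exact: H2.
Qed.

Lemma aff_within (R : realType) (f : R -> R) (A : set R) (m k : R) :
  {within A, continuous f} -> {within A, continuous (fun r => f r * m + k)}.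
Proof.
move=> cf.
have h : {within A, continuous ((fun y => y * m + k) \o f)}.
  apply: within_continuous_comp => // x _.
  have h1 : {for x, continuous (fun y : R => y)} by exact: cvg_id.
  have h2 : {for x, continuous (fun _ : R => m)} by exact: cst_continuous.
  have h3 : {for x, continuous (fun _ : R => k)} by exact: cst_continuous.
  exact: (continuousD (continuousM h1 h2) h3).
exact: h.
Qed.

Definition lam (R : realType) n (p d z : 'rV[R]_n.+1) : R := dotv (z - p) d / dotv d d.

Lemma lam_line (R : realType) n (p d : 'rV[R]_n.+1) (mu : R) :
  d != 0 -> lam p d (p + mu *: d) = mu.
Proof.
move=> d0; rewrite /lam addrC addKr dotvZl mulfK //.
by rewrite gt_eqF // dotv_gt0.
Qed.

Lemma lam_within (R : realType) n (f : R -> 'rV[R]_n.+1) (p d : 'rV[R]_n.+1) (A : set R) :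
  {within A, continuous f} -> {within A, continuous (fun r => lam p d (f r))}.
Proof.
move=> cf.
have -> : (fun r => lam p d (f r)) =
    (fun r => dotv (f r) d * (dotv d d)^-1 + (- (dotv p d * (dotv d d)^-1))).
  by apply/funext => r; rewrite /lam dotvBl mulrBl.
exact/aff_within/dotv_within.
Qed.

Lemma seg_facts (R : realType) n (X : set 'rV[R]_n.+1) (alpha : R -> 'rV[R]_n.+1) :
  path_in X alpha -> segment_param alpha ->
  [/\ alpha 1 - alpha 0 != 0,
      (forall r, 0 <= r <= 1 ->
         alpha r = alpha 0 + lam (alpha 0) (alpha 1 - alpha 0) (alpha r) *: (alpha 1 - alpha 0)),
      {within `[0, 1], continuous (fun r => lam (alpha 0) (alpha 1 - alpha 0) (alpha r))},
      (forall x y, 0 <= x <= 1 -> 0 <= y <= 1 ->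
         lam (alpha 0) (alpha 1 - alpha 0) (alpha x) = lam (alpha 0) (alpha 1 - alpha 0) (alpha y) -> x = y) &
      (forall x y, 0 <= x <= 1 -> 0 <= y <= 1 -> x <= y ->
         lam (alpha 0) (alpha 1 - alpha 0) (alpha x) <= lam (alpha 0) (alpha 1 - alpha 0) (alpha y))].
Proof.
move=> [ca _] [[p [q himg]] inj].
have inj' : forall x y, 0 <= x <= 1 -> 0 <= y <= 1 -> alpha x = alpha y -> x = y.
  by move=> x y hx hy; apply: inj; rewrite in_itv.
have onseg : forall r, 0 <= r <= 1 -> exists s, alpha r = p + s *: (q - p).
  move=> r hr; have : (alpha @` `[0, 1]) (alpha r) by exists r => //=; rewrite in_itv.
  rewrite himg => -[s _ e]; exists s; rewrite -e scalerBr scalerBl scale1r.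
  by rewrite addrA addrAC.
have h01 : 0 <= (0:R) <= 1 by rewrite lexx ler01.
have h11 : 0 <= (1:R) <= 1 by rewrite lexx ler01.
have [s0 e0] := onseg 0 h01; have [s1 e1] := onseg 1 h11.
set d := alpha 1 - alpha 0.
have d0 : d != 0.
  apply/eqP => hd; have : alpha 1 = alpha 0 by apply/eqP; rewrite -subr_eq0 -/d hd.
  by move/(inj' _ _ h11 h01)/eqP; rewrite oner_eq0.
have ed : d = (s1 - s0) *: (q - p).
  by rewrite /d e1 e0 opprD addrACA subrr add0r scalerBl.
have s10 : s1 - s0 != 0 by apply: contraNneq d0 => h; rewrite ed h scale0r.
have line : forall r, 0 <= r <= 1 -> alpha r = alpha 0 + lam (alpha 0) d (alpha r) *: d.
  move=> r hr; have [sr er] := onseg r hr.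
  have H : alpha r = alpha 0 + ((sr - s0) / (s1 - s0)) *: d.
    rewrite er e0 ed scalerA divfK // -addrA; congr (p + _).
    by rewrite scalerBl addrC subrK.
  by rewrite H lam_line.
have ct : {within `[0, 1], continuous (fun r => lam (alpha 0) d (alpha r))}.
  exact: lam_within.
have tinj : forall x y, 0 <= x <= 1 -> 0 <= y <= 1 ->
    lam (alpha 0) d (alpha x) = lam (alpha 0) d (alpha y) -> x = y.
  move=> x y hx hy e; apply: inj' => //.
  by rewrite (line x hx) (line y hy) e.
split => //.
have t0 : lam (alpha 0) d (alpha 0) = 0 by rewrite /lam subrr dotv0l mul0r.
have t1 : lam (alpha 0) d (alpha 1) = 1.
  by rewrite /lam -/d divff // gt_eqF // dotv_gt0.
have := @segment_continuous_inj_le R (fun r => lam (alpha 0) d (alpha r)) 0 1.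
rewrite t0 t1 ler01 => /(_ isT ct) hm.
move=> x y hx hy xy.
rewrite hm ?in_itv //.
Qed.

Lemma build_reparam (R : realType) n (alpha beta : R -> 'rV[R]_n.+1) (p d : 'rV[R]_n.+1) :
  (forall r, 0 <= r <= 1 -> alpha r = p + lam p d (alpha r) *: d) ->
  {within `[0, 1], continuous (fun r => lam p d (alpha r))} ->
  (forall x y, 0 <= x <= 1 -> 0 <= y <= 1 -> lam p d (alpha x) = lam p d (alpha y) -> x = y) ->
  lam p d (alpha 0) = 0 -> lam p d (alpha 1) = 1 ->
  {within `[0, 1], continuous (fun t => lam p d (beta t))} ->
  (forall t, 0 <= t <= 1 -> beta t = p + lam p d (beta t) *: d) ->
  (forall x y, 0 <= x <= 1 -> 0 <= y <= 1 -> x <= y -> lam p d (beta x) <= lam p d (beta y)) ->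
  lam p d (beta 0) = 0 -> lam p d (beta 1) = 1 ->
  reparam_of beta alpha.
Proof.
set tau := fun r => lam p d (alpha r); set xb := fun t => lam p d (beta t).
move=> hal ct tinj t0 t1 cx hbe xm x0 x1.
have h01 : 0 <= (0:R) <= 1 by rewrite lexx ler01.
have h11 : 0 <= (1:R) <= 1 by rewrite lexx ler01.
pose g := 'pinv_(fun _ : R => (0:R)) (`[0, 1]%classic : set R) tau.
have hcan : {in `[0, 1], cancel tau g}.
  move=> x hx.
  have hinj : {in (`[0, 1]%classic : set R) &, injective tau}.
    move=> u v /set_mem hu /set_mem hv.
    move: hu hv; rewrite /= !in_itv /= => hu hv; exact: tinj.
  by apply: (pinvKV _ hinj); apply: mem_set.
have gK : forall y, 0 <= y <= 1 -> tau (g y) = y /\ 0 <= g y <= 1.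
  move=> y hy.
  have [r hr ry] : exists2 r, r \in `[0, 1] & tau r = y.
    apply: IVT => //.
    rewrite /tau t0 t1 (min_idPl ler01) (max_idPr ler01); exact: hy.
  by rewrite -ry hcan //; split => //; move: hr; rewrite in_itv.
have xb01 : forall t, 0 <= t <= 1 -> 0 <= xb t <= 1.
  move=> t ht; rewrite -[X in X <= _ <= _]x0 -[X in _ <= _ <= X]x1.
  by rewrite !xm //; case/andP: ht.
have gc : {within `[0, 1], continuous g}.
  have := segment_can_le_continuous ler01 ct hcan.
  by rewrite /tau t0 t1.
have gm := segment_can_le ler01 ct hcan.
rewrite /tau t0 t1 in gm.
exists (fun t => g (xb t)); split.
  apply: (within_comp2 cx gc) => t ht /=.
  by have := xb01 t; rewrite !in_itv /=; apply; move: ht; rewrite /= in_itv.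
split.
  move=> x y hx hy xy; rewrite gm ?in_itv /= ?xb01 //.
  by apply: xm; move: hx hy; rewrite !in_itv.
split.
  by rewrite /xb x0 -t0 hcan // in_itv /= lexx ler01.
split.
  by rewrite /xb x1 -t1 hcan // in_itv /= lexx ler01.
move=> t; rewrite in_itv /= => ht.
have [e1 e2] := gK _ (xb01 t ht).
rewrite (hbe t ht) (hal _ e2); congr (p + _ *: d); exact: esym e1.
Qed.

Lemma part1 (R : realType) n (alpha beta : R -> 'rV[R]_n.+1) (p d : 'rV[R]_n.+1) h :
  (forall r, 0 <= r <= 1 -> alpha r = p + lam p d (alpha r) *: d) ->
  (forall x y, 0 <= x <= 1 -> 0 <= y <= 1 -> x <= y -> lam p d (alpha x) <= lam p d (alpha y)) ->
  {within `[0, 1], continuous beta} -> beta 0 = alpha 0 -> beta 1 = alpha 1 ->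
  similarity h ->
  (oscillation 0 1 alpha (gPQ h) <= oscillation 0 1 beta (gPQ h))%E.
Proof.
move=> hal tm cb b0 b1 hsim.
have [W [k hW]] := sim_affine hsim.
rewrite !oscE.
have eA : (fun r => gPQ h (alpha r)) = (fun r => gprof (dotv (alpha r) W + k)).
  by apply/funext => r; rewrite /gPQ hW.
have eB : (fun r => gPQ h (beta r)) = (fun r => gprof (dotv (beta r) W + k)).
  by apply/funext => r; rewrite /gPQ hW.
rewrite eA eB.
apply: (@osc_le2 R (@gprof R) (fun r => dotv (alpha r) W + k) (fun r => dotv (beta r) W + k)).
- have key : forall x, 0 <= x <= 1 ->
      dotv (alpha x) W + k = dotv p W + k + lam p d (alpha x) * dotv d W.
    by move=> x hx; rewrite {1}(hal x hx) dotvDl dotvZl; lra.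
  case: (leP 0 (dotv d W)) => hs; [left|right] => x y hx hy xy;
    rewrite (key x hx) (key y hy); have := tm x y hx hy xy; nra.
- have -> : (fun r => dotv (beta r) W + k) = (fun r => dotv (beta r) W * 1 + k).
    by apply/funext => r; rewrite mulr1.
  exact/aff_within/dotv_within.
- by rewrite b0.
- by rewrite b1.
Qed.

Lemma part2 (R : realType) n (alpha beta : R -> 'rV[R]_n.+1) (p d : 'rV[R]_n.+1) :
  d != 0 ->
  (forall r, 0 <= r <= 1 -> alpha r = p + lam p d (alpha r) *: d) ->
  {within `[0, 1], continuous (fun r => lam p d (alpha r))} ->
  (forall x y, 0 <= x <= 1 -> 0 <= y <= 1 -> lam p d (alpha x) = lam p d (alpha y) -> x = y) ->
  (forall x y, 0 <= x <= 1 -> 0 <= y <= 1 -> x <= y -> lam p d (alpha x) <= lam p d (alpha y)) ->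
  alpha 0 = p -> alpha 1 = p + d ->
  {within `[0, 1], continuous beta} -> beta 0 = p -> beta 1 = p + d ->
  ~ reparam_of beta alpha ->
  exists P Q : set 'rV[R]_n.+1, distinct_parallel_hyperplanes P Q /\
    (exists h, normalizes P Q h) /\
    forall h, normalizes P Q h ->
      (oscillation 0 1 alpha (gPQ h) < oscillation 0 1 beta (gPQ h))%E.
Proof.
move=> d0 hal ct tinj tm a0 a1 cb b0 b1 nrep.
have h01 : 0 <= (0:R) <= 1 by rewrite lexx ler01.
have h11 : 0 <= (1:R) <= 1 by rewrite lexx ler01.
have dd0 : 0 < dotv d d by exact: dotv_gt0.
have lamE : forall z, lam p d z * dotv d d = dotv (z - p) d.
  by move=> z; rewrite /lam divfK // gt_eqF.
have [[t0 [ht0 hoff]] | hon] :=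
  pselect (exists t, 0 <= t <= 1 /\ beta t != p + lam p d (beta t) *: d).
  set xt := lam p d (beta t0).
  set w := beta t0 - (p + xt *: d).
  have w0 : w != 0 by rewrite subr_eq0.
  have dwd : dotv d w = 0.
    rewrite dotvC /w dotvBl dotvDl dotvZl /xt lamE dotvBl; lra.
  set a := dotv p w; set b := dotv (beta t0) w.
  have hba : b - a = dotv w w.
    have ew : w + xt *: d = beta t0 - p by rewrite /w opprD addrA subrK.
    have -> : b - a = dotv (w + xt *: d) w by rewrite ew dotvBl.
    by rewrite dotvDl dotvZl dwd mulr0 addr0.
  have ab : a < b by rewrite -subr_gt0 hba dotv_gt0.
  have ba0 : b - a != 0 by rewrite hba gt_eqF // dotv_gt0.
  exists [set x | dotv x w = a], [set x | dotv x w = b]; split.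
    by exists w, a, b; split => //; split; [rewrite lt_eqF | split].
  split; first exact: exists_normalizer.
  move=> h hn; have hf := norm_formula w0 (negbT (lt_eqF ab)) hn.
  rewrite !oscE.
  have phiE : forall r, 0 <= r <= 1 -> gPQ h (alpha r) = -1.
    move=> r hr; rewrite /gPQ hf (hal r hr) dotvDl dotvZl dwd mulr0 addr0 -/a subrr.
    by rewrite mul0r mulr0 addr0 gprofm3.
  apply: (@osc_strict R (fun r => gPQ h (alpha r)) (fun r => gPQ h (beta r)) t0 1).
  - by move=> x y hx hy _; rewrite !phiE.
  - by move=> r _; exact: gprof_bound.
  - by rewrite /= b0 a0.
  - by rewrite /= b1 a1.
  - by case/andP: ht0.
  - by case/andP: ht0.
  - exact: lexx.
  - by rewrite /= /gPQ hf -/b divff // mulr1 (_ : -3 + 6 = 3 :> R) ?gprof3 //; lra.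
  - by rewrite /= b1 -a1 phiE.
have online : forall t, 0 <= t <= 1 -> beta t = p + lam p d (beta t) *: d.
  move=> t ht; apply/eqP; apply/negP => hne; apply: hon; exists t; split => //.
  exact/negP.
have dotl : forall t, 0 <= t <= 1 -> dotv (beta t) d = dotv p d + lam p d (beta t) * dotv d d.
  by move=> t ht; rewrite {1}(online t ht) dotvDl dotvZl.
have [[s [t [hs [ht [st hlt]]]]] | hmono] := pselect (exists s t,
    0 <= s <= 1 /\ 0 <= t <= 1 /\ s <= t /\ lam p d (beta t) < lam p d (beta s)).
  set a := dotv (beta t) d; set b := dotv (beta s) d.
  have hba : b - a = (lam p d (beta s) - lam p d (beta t)) * dotv d d.
    by rewrite /a /b (dotl s hs) (dotl t ht); lra.
  have ab0 : 0 < b - a by rewrite hba mulr_gt0 // subr_gt0.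
  have ab : a < b by rewrite -subr_gt0.
  have ba0 : b - a != 0 by rewrite gt_eqF.
  exists [set x | dotv x d = a], [set x | dotv x d = b]; split.
    by exists d, a, b; split => //; split; [rewrite lt_eqF | split].
  split; first exact: exists_normalizer.
  move=> h hn; have hf := norm_formula d0 (negbT (lt_eqF ab)) hn.
  rewrite !oscE.
  apply: (@osc_strict R (fun r => gPQ h (alpha r)) (fun r => gPQ h (beta r)) s t).
  - move=> x y hx hy xy; rewrite /gPQ !hf; apply: gprof_mono.
    rewrite (hal x hx) (hal y hy) !dotvDl !dotvZl.
    rewrite lerD2l ler_pM2l // ler_pM2r ?invr_gt0 // lerD2r lerD2l ler_pM2r //.
    exact: tm.
  - by move=> r _; exact: gprof_bound.
  - by rewrite /= b0 a0.
  - by rewrite /= b1 a1.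
  - by case/andP: hs.
  - exact: st.
  - by case/andP: ht.
  - by rewrite /= /gPQ hf -/b divff // mulr1 (_ : -3 + 6 = 3 :> R) ?gprof3 //; lra.
  - by rewrite /= /gPQ hf -/a subrr mul0r mulr0 addr0 gprofm3.
exfalso; apply: nrep.
have l0 : lam p d p = 0 by rewrite /lam subrr dotv0l mul0r.
have l1 : lam p d (p + d) = 1 by have := lam_line p 1 d0; rewrite scale1r.
apply: (@build_reparam R n alpha beta p d) => //.
- by rewrite a0.
- by rewrite a1.
- exact: lam_within.
- move=> x y hx hy xy; rewrite leNgt; apply/negP => hlt; apply: hmono.
  by exists x, y.
- by rewrite b0.
- by rewrite b1.
Qed.

Unset Implicit Arguments.

Theorem lemma3p4 (R : realType) (n : nat) (X : set 'rV[R]_n.+1)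
    (alpha beta : R -> 'rV[R]_n.+1) :
  path_in X alpha -> segment_param alpha ->
  path_in X beta -> beta 0 = alpha 0 -> beta 1 = alpha 1 ->
  (forall P Q : set 'rV[R]_n.+1, distinct_parallel_hyperplanes P Q ->
     forall h, normalizes P Q h ->
       (oscillation 0 1 alpha (gPQ h) <= oscillation 0 1 beta (gPQ h))%E) /\
  (~ reparam_of beta alpha ->
     exists P Q : set 'rV[R]_n.+1, distinct_parallel_hyperplanes P Q /\
       (exists h, normalizes P Q h) /\
       forall h, normalizes P Q h ->
         (oscillation 0 1 alpha (gPQ h) < oscillation 0 1 beta (gPQ h))%E).
Proof.
move=> pa sa pb b0 b1.
have [d0 hal ct tinj tm] := seg_facts pa sa.
have [cb _] := pb.
have a1 : alpha 1 = alpha 0 + (alpha 1 - alpha 0) by rewrite addrC subrK.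
split.
  move=> P Q _ h [hsim _].
  exact: (part1 (p := alpha 0) (d := alpha 1 - alpha 0)).
move=> nrep.
apply: (@part2 R n alpha beta (alpha 0) (alpha 1 - alpha 0)) => //.
by rewrite b1.
Qed.
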